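(* Let $\Phi$ be a real, additive gain graph on $\{1,\dots,n\}$ and let $\mathbf{Q}=(Q_1,\dots,Q_n)\in(\mathbb{E}^d)^n$ with $Q_i\neq Q_j$ whenever $i$ and $j$ are adjacent in $\Phi$. Let $C$ be a circle in $\Phi$ with $l+1$ vertices $v_1,\dots,v_{l+1}$, and let $\mathcal{C}=\{h(e):e\in C\}$. Suppose $Q_{v_1},\dots,Q_{v_{l+1}}$ are affinely independent. If $C$ is balanced, then $\bigcap\mathcal{C}$ is an affine flat of dimension $d-l$.
   Context: $\mathbb{E}^d$ is Euclidean $d$-space with distance $d(\cdot,\cdot)$; $\psi_{ij}(P)=d(P,Q_i)^2-d(P,Q_j)^2$. A real, additive gain graph $\Phi$ on vertex set $\{1,\dots,n\}$ is a finite graph (multiple edges allowed, every edge with two distinct endpoints) with gains $\phi(e;i,j)\in\mathbb{R}$ for each edge $e$ with endpoints $i,j$, satisfying $\phi(e;j,i)=-\phi(e;i,j)$. A circle is a simple closed path; it is balanced if the sum of its gains, read in a consistent direction, is $0$. The Pythagorean arrangement $\mathcal{H}(\Phi;\mathbf{Q})$ consists of the hyperplanes $h(e)=\{P:\psi_{ij}(P)=\phi(e;i,j)\}$, one for each edge $e$ with endpoints $i,j$. *)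

(* Defs.v *)
From HB Require Import structures.
From mathcomp Require Import all_boot all_order all_algebra.
From mathcomp Require Import reals.
Set Implicit Arguments. Unset Strict Implicit. Unset Printing Implicit Defensive.
Import Order.TTheory GRing.Theory Num.Theory.
Local Open Scope ring_scope.

Definition edist (R : realType) (d : nat) (P Q : 'rV[R]_d) : R :=
  Num.sqrt (\sum_(k < d) (P ord0 k - Q ord0 k) ^+ 2).

Definition psi (R : realType) (d n : nat) (Q : 'I_n -> 'rV[R]_d) (i j : 'I_n)
  (P : 'rV[R]_d) : R := edist P (Q i) ^+ 2 - edist P (Q j) ^+ 2.

(* A real additive gain graph on {1..n} (here 'I_n): a finite type E of edges,
   each edge e with an orientation-reference pair of endpoints (ends e)
   (distinct), and gain g e = phi(e; (ends e).1, (ends e).2).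
   The gain in the opposite direction is -(g e). *)
Record gain_graph (R : realType) (n : nat) := GainGraph {
  gedge : finType;
  gends : gedge -> 'I_n * 'I_n;
  ggain : gedge -> R;
  gends_neq : forall e, (gends e).1 != (gends e).2 }.

Definition joins (R : realType) n (G : gain_graph R n) (e : gedge G) (i j : 'I_n) : bool :=
  (gends e == (i, j)) || (gends e == (j, i)).

Definition phi (R : realType) n (G : gain_graph R n) (e : gedge G) (i j : 'I_n) : R :=
  if gends e == (i, j) then ggain e else - ggain e.

Definition adjacent (R : realType) n (G : gain_graph R n) (i j : 'I_n) : Prop :=
  exists e : gedge G, joins e i j.

Definition hyp (R : realType) d n (G : gain_graph R n) (Q : 'I_n -> 'rV[R]_d) (e : gedge G)
  (P : 'rV[R]_d) : Prop :=
  psi Q (gends e).1 (gends e).2 P = phi e (gends e).1 (gends e).2.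

(* A circle with l+1 vertices v_0..v_l (paper: v_1..v_{l+1}) and edges c_0..c_l,
   edge c_k joining v_k and v_{k+1 mod (l+1)}; vertices and edges distinct. *)
Definition is_circle (R : realType) n (G : gain_graph R n) (l : nat)
  (v : 'I_l.+1 -> 'I_n) (c : 'I_l.+1 -> gedge G) : Prop :=
  injective v /\ injective c /\ forall k, joins (c k) (v k) (v (ordS k)).

Definition balanced (R : realType) n (G : gain_graph R n) (l : nat)
  (v : 'I_l.+1 -> 'I_n) (c : 'I_l.+1 -> gedge G) : Prop :=
  \sum_(k < l.+1) phi (c k) (v k) (v (ordS k)) = 0.

Definition aff_indep (R : realType) d m (X : 'I_m -> 'rV[R]_d) : Prop :=
  forall a : 'I_m -> R,
    \sum_(k < m) a k = 0 -> \sum_(k < m) a k *: X k = 0 -> forall k, a k = 0.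

Definition affine_flat_dim (R : realType) d (S : 'rV[R]_d -> Prop) (m : nat) : Prop :=
  exists (P0 : 'rV[R]_d) (U : {vspace 'rV[R]_d}),
    \dim U = m /\ forall P, S P <-> P - P0 \in U.

(* Main.v *)
Require Import Defs.
From HB Require Import structures.
From mathcomp Require Import all_boot all_order all_algebra.
From mathcomp Require Import reals.
From mathcomp Require Import zify ring lra.
Import Order.TTheory GRing.Theory Num.Theory.
Local Open Scope ring_scope.

Lemma dimrv (R : realType) d : \dim {: 'rV[R]_d} = d.
Proof. by rewrite dimvf /dim /= mul1n. Qed.

Lemma edist2 (R : realType) d (P X : 'rV[R]_d) :
  edist P X ^+ 2 = \sum_(k < d) (P ord0 k - X ord0 k) ^+ 2.
Proof. by rewrite /edist sqr_sqrtr // sumr_ge0 // => i _; rewrite sqr_ge0. Qed.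

Lemma hyp_joins (R : realType) d n (G : gain_graph R n) (Q : 'I_n -> 'rV[R]_d)
  (e : gedge G) i j P : joins e i j -> (hyp Q e P <-> psi Q i j P = phi e i j).
Proof.
rewrite /joins /hyp => /orP [] /eqP E.
  by rewrite E.
have ne := gends_neq e; rewrite E /= in ne.
rewrite /phi E /= eqxx.
have -> : ((j, i) == (i, j)) = false.
  by apply/negbTE; apply: contra ne => /eqP [->].
rewrite /psi; split => H; first by rewrite -H opprB.
by rewrite -[ggain e]opprK -H opprB.
Qed.

Lemma ordS_inord l m : (m < l)%N -> ordS (inord m : 'I_l.+1) = inord m.+1.
Proof.
move=> ml; apply: val_inj; rewrite /= !inordK ?modn_small //; lia.
Qed.

Lemma telesc (R : realType) l (e g : 'I_l.+1 -> R) :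
  \sum_(k < l.+1) g k = 0 ->
  (forall k, e k - e (ordS k) = g k) <->
  (forall k : 'I_l, e ord0 - e (lift ord0 k) = \sum_(j < k.+1) g (inord j)).
Proof.
move=> hs.
have liftE (k : 'I_l) : lift ord0 k = inord k.+1.
  by apply: val_inj; rewrite /= inordK // ltnS.
have i0 : (inord 0 : 'I_l.+1) = ord0 by apply: val_inj; rewrite /= inordK.
split => H.
  have F m : (m <= l)%N -> e ord0 - e (inord m) = \sum_(j < m) g (inord j).
    elim: m => [|m IH] ml; first by rewrite i0 subrr big_ord0.
    rewrite big_ord_recr /= -IH; last by lia.
    have := H (inord m); rewrite ordS_inord // => <-.
    by rewrite subrKA.
  by move=> k; rewrite liftE F.
have F m : (m <= l)%N -> e ord0 - e (inord m) = \sum_(j < m) g (inord j).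
  case: m => [|m] ml; first by rewrite i0 subrr big_ord0.
  by have := H (Ordinal ml); rewrite liftE.
move=> k; have [kl|kl] := ltnP k l.
  have := @ordS_inord l k kl; rewrite inord_val => ->.
  have := F k.+1 kl; have := F k (ltnW kl).
  rewrite big_ord_recr /= inord_val => h1 h2.
  have -> : e k - e (inord k.+1) =
     (e ord0 - e (inord k.+1)) - (e ord0 - e k) by ring.
  by rewrite h1 h2; ring.
have kl' : k = ord_max by apply: val_inj => /=; have := ltn_ord k; lia.
have -> : ordS k = ord0 by apply: val_inj; rewrite kl' /= modnn.
rewrite big_ord_recr /= in hs.
have hw : \sum_(i < l) g (widen_ord (leqnSn l) i) = \sum_(j < l) g (inord j).
  apply: eq_bigr => i _; have -> // : widen_ord (leqnSn l) i = inord i by apply: val_inj; rewrite /= inordK //; have := ltn_ord i; lia.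
rewrite hw -kl' in hs.
have hl := F l (leqnn l).
have il : (inord l : 'I_l.+1) = k by rewrite kl'; apply: val_inj; rewrite /= inordK.
rewrite il in hl.
rewrite -[e k - e ord0]opprB hl.
have -> : g k = - \sum_(j < l) g (inord j).
  by apply/eqP; rewrite -addr_eq0 addrC hs.
by [].
Qed.

Lemma Ediff (R : realType) d (P X0 Xj : 'rV[R]_d) :
  edist P X0 ^+ 2 - edist P Xj ^+ 2 =
  \sum_i (X0 0 i ^+ 2 - Xj 0 i ^+ 2) - 2 * \sum_i P 0 i * (X0 0 i - Xj 0 i).
Proof.
rewrite !edist2 -sumrB mulr_sumr -sumrB; apply: eq_bigr => i _; ring.
Qed.

Lemma solve2 (R : realType) (A D S : R) : (A - 2 * D = S) <-> (D = (A - S) / 2).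
Proof. split => H; lra. Qed.

Theorem lemma5p3 (R : realType) (d n : nat) (G : gain_graph R n)
  (Q : 'I_n -> 'rV[R]_d)
  (hQ : forall i j : 'I_n, adjacent G i j -> Q i != Q j)
  (l : nat) (v : 'I_l.+1 -> 'I_n) (c : 'I_l.+1 -> gedge G)
  (hC : is_circle v c)
  (hind : aff_indep (fun k => Q (v k)))
  (hbal : balanced v c) :
  affine_flat_dim (fun P => forall k : 'I_l.+1, hyp Q (c k) P) (d - l).
Proof.
set X := fun j => Q (v j).
set g := fun k => phi (c k) (v k) (v (ordS k)).
set S := fun k : 'I_l => \sum_(j < k.+1) g (inord j).
set N : 'M[R]_(l, d) := \matrix_(k < l) (X ord0 - X (lift ord0 k)).
set M := N^T.
set b : 'rV[R]_l := \row_k ((\sum_i (X ord0 0 i ^+ 2 - X (lift ord0 k) 0 i ^+ 2) - S k) / 2).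
have key : forall P, (forall k, hyp Q (c k) P) <-> P *m M = b.
  move=> P.
  set E := fun j => edist P (X j) ^+ 2.
  have step1 : (forall k, hyp Q (c k) P) <-> (forall k, E k - E (ordS k) = g k).
    split => H k; have := H k; rewrite (@hyp_joins _ _ _ _ Q _ _ _ P (hC.2.2 k)) //.
  rewrite step1 (@telesc _ _ E g hbal).
  split => H.
    apply/rowP => k; have := H k; rewrite /E Ediff solve2 !mxE => h.
    by rewrite /S -h; apply: eq_bigr => i _; rewrite /M /N !mxE.
  move=> k; move/rowP: H => /(_ k); rewrite /E Ediff solve2 !mxE => h.
  rewrite /S -h; apply: eq_bigr => i _; rewrite /M /N !mxE //.
have freeN : row_free N.
  rewrite -kermx_eq0 -submx0; apply/row_subP => i.
  set u := row i (kermx N).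
  have hu : u *m N = 0 by apply/sub_kermxP; exact: row_sub.
  suff -> : u = 0 by rewrite sub0mx.
  pose a := fun j : 'I_l.+1 => if unlift ord0 j is Some k then - u 0 k else \sum_k u 0 k.
  have ha := hind a.
  have a0 : a ord0 = \sum_k u 0 k by rewrite /a unlift_none.
  have aL (k : 'I_l) : a (lift ord0 k) = - u 0 k by rewrite /a liftK.
  have sa : \sum_(j < l.+1) a j = 0.
    rewrite big_ord_recl a0.
    rewrite (eq_bigr (fun k => - u 0 k) (fun k _ => aL k)).
    by rewrite sumrN subrr.
  have sb : \sum_(j < l.+1) a j *: Q (v j) = 0.
    rewrite big_ord_recl a0.
    rewrite (eq_bigr (fun k => - u 0 k *: Q (v (lift ord0 k))) (fun k _ => congr1 (fun t => t *: Q (v (lift ord0 k))) (aL k))).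
    rewrite -[RHS]hu mulmx_sum_row scaler_suml -big_split; apply: eq_bigr => k _ /=.
    by rewrite rowK /X scalerBr scaleNr.
  apply/rowP => k; rewrite [RHS]mxE.
  have := ha sa sb (lift ord0 k); rewrite aL => /eqP.
  by rewrite oppr_eq0 => /eqP.
have fullM : row_full M by rewrite /row_full mxrank_tr.
have [B hB] := row_fullP fullM.
set P0 := b *m B.
have hP0 : P0 *m M = b by rewrite /P0 -mulmxA hB mulmx1.
set f : 'Hom('rV[R]_d, 'rV[R]_l) := linfun (mulmxr M).
have fE x : f x = x *m M by rewrite lfunE.
exists P0, (lker f); split.
  have := limg_ker_dim f fullv.
  rewrite capfv.
  have -> : (f @: fullv)%VS = fullv.
    apply/eqP; rewrite eqEsubv subvf /=; apply/subvP => y _.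
    have -> : y = f (y *m B) by rewrite fE -mulmxA hB mulmx1.
    exact: memv_img (memvf _).
  rewrite (dimrv R l) (dimrv R d) => h; have := congr1 (subn^~ l) h; rewrite /= addnK; exact.
move=> P; rewrite key memv_ker fE mulmxBl hP0 subr_eq0.
by split => [->|/eqP].
Qed.
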